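(* Assume the standing hypotheses and definitions in the context. Then $H(t,G(t,y))=y$ for all $t\in\mathbb{R}$ and $y\in\mathbb{R}^n$.
   Context: Standing hypotheses: $A:\mathbb{R}\to\mathbb{R}^{n\times n}$ is continuous and bounded, $T(t,s)$ is the evolution operator of $x'=A(t)x$. $\mu:\mathbb{R}\to(0,\infty)$ is an increasing differentiable growth rate: $\mu(0)=1$, $\lim_{t\to-\infty}\mu(t)=0$, $\lim_{t\to+\infty}\mu(t)=+\infty$. The system $x'=A(t)x$ admits an algebraic dichotomy: projections $P(s)$, $Q(s)=I-P(s)$, constants $K,\alpha>0$ with $T(t,s)P(s)=P(t)T(t,s)$, $\|T(t,s)P(s)\|\le K(\mu(t)/\mu(s))^{-\alpha}$ ($t\ge s$), $\|T(t,s)Q(s)\|\le K(\mu(s)/\mu(t))^{-\alpha}$ ($t\le s$). $f:\mathbb{R}\times\mathbb{R}^n\to\mathbb{R}^n$ is continuous, $\|f(t,x)\|\le\beta\mu'(t)\mu^{-1}(t)$, $\|f(t,x_1)-f(t,x_2)\|\le\gamma\mu'(t)\mu^{-1}(t)\|x_1-x_2\|$ for constants $\beta,\gamma\ge0$, and $6K\gamma\alpha^{-1}<1$. $X(t,\tau,\xi)$ (resp. $Y(t,\tau,\xi)$) is the solution of $x'=A(t)x+f(t,x)$ (resp. $x'=A(t)x$) with value $\xi$ at $t=\tau$. $h(t,(\tau,\xi))$ is the unique solution bounded on $\mathbb{R}$ of $Z'=A(t)Z-f(t,X(t,\tau,\xi))$, and $g(t,(\tau,\xi))$ the unique solution bounded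 on $\mathbb{R}$ of $Z'=A(t)Z+f(t,Y(t,\tau,\xi)+Z)$ (both exist and are unique under these hypotheses). Define $H(t,x)=x+h(t,(t,x))$ and $G(t,y)=y+g(t,(t,y))$. *)

(* Defs.v *)
(* Vectors of R^n are column vectors 'cV[R]_n with the (sup) norm of
   MathComp-Analysis; matrix bounds are stated as induced operator-norm
   bounds (forall x, |M x| <= c |x|). *)
From HB Require Import structures.
From mathcomp Require Import all_boot all_order all_algebra.
From mathcomp Require Import all_classical all_reals all_analysis.
Set Implicit Arguments. Unset Strict Implicit. Unset Printing Implicit Defensive.
Import Order.TTheory GRing.Theory Num.Theory.
Import numFieldNormedType.Exports.
Local Open Scope ring_scope.
Local Open Scope classical_set_scope.

Section Defs.
Variables (R : realType) (n : nat).
Notation vec := 'cV[R]_n.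
Notation mat := 'M[R]_n.

Definition evolution_operator (A : R -> mat) (T : R -> R -> mat) : Prop :=
  (forall s, T s s = 1%:M) /\
  (forall (t s : R), is_derive t (1 : R) (fun u : R => T u s) (A t *m T t s)).

Definition growth_rate (mu : R -> R) : Prop :=
  (forall t, 0 < mu t) /\
  (forall s t, s < t -> mu s < mu t) /\
  (forall t : R, derivable mu t (1 : R)) /\
  mu 0 = 1 /\
  (mu x @[x --> -oo] --> 0) /\
  (mu x @[x --> +oo] --> +oo).

Definition algebraic_dichotomy (mu : R -> R) (T : R -> R -> mat)
    (P : R -> mat) (K alpha : R) : Prop :=
  0 < K /\ 0 < alpha /\
  (forall s, P s *m P s = P s) /\
  (forall t s, T t s *m P s = P t *m T t s) /\
  (forall t s (x : vec), s <= t ->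
     `|T t s *m P s *m x| <= K * ((mu t / mu s) `^ (- alpha)) * `|x|) /\
  (forall t s (x : vec), t <= s ->
     `|T t s *m (1%:M - P s) *m x| <= K * ((mu s / mu t) `^ (- alpha)) * `|x|).

Definition solves (F : R -> vec -> vec) (x : R -> vec) : Prop :=
  forall t : R, is_derive t (1 : R) x (F t (x t)).

Definition bounded_on_R (x : R -> vec) : Prop :=
  exists M : R, forall t, `|x t| <= M.

Definition H_of (h : R -> R -> vec -> vec) (t : R) (x : vec) : vec :=
  x + h t t x.
Definition G_of (g : R -> R -> vec -> vec) (t : R) (y : vec) : vec :=
  y + g t t y.

End Defs.

(* Main.v *)
Set Warnings "-notation-overridden,-ambiguous-paths,-notation-incompatible-prefix,-deprecated".
Require Import Defs.
From HB Require Import structures.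
From mathcomp Require Import all_boot all_order all_algebra.
From mathcomp Require Import all_classical all_reals all_analysis.
From mathcomp Require Import ring lra.
Import Order.TTheory GRing.Theory Num.Theory.
Import numFieldNormedType.Exports.
Local Open Scope ring_scope.
Section Helpers.
Variable R : realType.

Lemma is_derive_coord m k (u : R -> 'M[R]_(m,k)) (t : R) du (i : 'I_m) (j : 'I_k) :
  is_derive t 1 u du -> is_derive t 1 (fun s => u s i j) (du i j).
Proof.
move=> [du1 du2]; have := du1; move/derivable_mxP => /(_ i j) di.
apply: DeriveDef => //.
by rewrite -du2 derive_mx // mxE.
Qed.

Lemma is_derive_mx m k (u : R -> 'M[R]_(m,k)) (t : R) (du : 'M[R]_(m,k)) :
  (forall i j, is_derive t 1 (fun s => u s i j) (du i j)) -> is_derive t 1 u du.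
Proof.
move=> H.
have d : derivable u t 1 by apply/derivable_mxP => i j; case: (H i j).
apply: DeriveDef => //.
rewrite derive_mx //; apply/matrixP => i j; rewrite mxE.
by case: (H i j).
Qed.

Lemma norm_coord m k (u : 'M[R]_(m,k)) i j : `|u i j| <= `|u|.
Proof.
rewrite [leRHS]/Num.Def.normr /= mx_normrE.
by apply: le_trans; last exact: (le_bigmax _ _ (i, j)).
Qed.

Lemma norm_le_coord m k (u : 'M[R]_(m,k)) c : 0 <= c ->
  (forall i j, `|u i j| <= c) -> `|u| <= c.
Proof.
move=> c0 H; rewrite [leLHS]/Num.Def.normr /= mx_normrE.
by apply: bigmax_le => // -[i j] _; exact: H.
Qed.

Lemma norm_mulmx_le m (B : 'M[R]_m) (x : 'cV[R]_m) :
  `|B *m x| <= m%:R * `|B| * `|x|.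
Proof.
apply: norm_le_coord; first by rewrite !mulr_ge0.
move=> i j; rewrite mxE.
apply: le_trans (ler_norm_sum _ _ _) _.
apply: le_trans (_ : \sum_(l < m) `|B| * `|x| <= _).
  apply: ler_sum => l _; rewrite normrM; apply: ler_pM => //.
  exact: norm_coord. exact: norm_coord.
by rewrite sumr_const card_ord -mulrA mulr_natl.
Qed.

End Helpers.
Section Unique.
Variable R : realType.
Local Open Scope classical_set_scope.

Lemma mu_deriv_ge0 (mu : R -> R) s : growth_rate mu -> 0 <= derive1 mu s.
Proof.
move=> [mu0 [muinc [mud _]]].
apply: (@incr_derive1_ge0 R mu setT).
- by move=> x _; exact: mud.
- by move=> x y _ _; exact: muinc.
- by rewrite interiorT.
Qed.

Lemma is_derive_mu (mu : R -> R) (s : R) : growth_rate mu ->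
  is_derive s 1 mu (derive1 mu s).
Proof.
move=> [_ [_ [mud _]]]; rewrite derive1E; exact: derivableP.
Qed.

Lemma derivable_cont (f : R -> R) :
  (forall s, derivable f s 1) -> continuous f.
Proof.
move=> df x; apply: differentiable_continuous; exact/derivable1_diffP.
Qed.

Lemma sq_coords_ge0 n (v : 'cV[R]_n) : 0 <= \sum_(i < n) v i 0 * v i 0.
Proof. by apply: sumr_ge0 => i _; rewrite -expr2 sqr_ge0. Qed.

Lemma norm_sq_le n (v : 'cV[R]_n) : `|v| * `|v| <= \sum_(i < n) v i 0 * v i 0.
Proof.
have [v0|] := eqVneq (`|v|) 0.
  by rewrite v0 mul0r sq_coords_ge0.
move=> vn0; have [[i j] /= hij] : exists ij : 'I_n * 'I_1, `|v| = `|v ij.1 ij.2|.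
  exact: mx_norm_neq0.
rewrite hij.
rewrite (ord1 j) -normrM (bigD1 i) //= ler_wpDr //.
  by apply: sumr_ge0 => l _; rewrite -expr2 sqr_ge0.
by rewrite normrM -expr2 -normrX ger0_norm // sqr_ge0.
Qed.

Lemma sq_coords_eq0 n (v : 'cV[R]_n) : \sum_(i < n) v i 0 * v i 0 = 0 -> v = 0.
Proof.
move=> /eqP; rewrite psumr_eq0; last by move=> i _; rewrite -expr2 sqr_ge0.
move=> /allP H; apply/matrixP => i j; rewrite (ord1 j) mxE.
have := H i (mem_index_enum _); rewrite /= -expr2 sqrf_eq0 => /eqP //.
Qed.

Lemma deriv_nincr (f df : R -> R) :
  (forall s : R, is_derive s 1 f (df s)) -> (forall s, df s <= 0) ->
  forall x y, x <= y -> f y <= f x.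
Proof.
move=> fd dfle x y xy.
apply: (@ler0_derive1_nincr R f x y); last first.
- by [].
- by [].
- by [].
- apply: continuous_subspaceT; apply: derivable_cont => z; by case: (fd z).
- by move=> z _; rewrite derive1E (@derive_val _ _ _ _ _ _ _ (fd z)).
- by move=> z _; case: (fd z).
Qed.

Lemma deriv_ndecr (f df : R -> R) :
  (forall s : R, is_derive s 1 f (df s)) -> (forall s, 0 <= df s) ->
  forall x y, x <= y -> f x <= f y.
Proof.
move=> fd dfle x y xy.
apply: (@ger0_derive1_ndecr R f x y); last first.
- by [].
- by [].
- by [].
- apply: continuous_subspaceT; apply: derivable_cont => z; by case: (fd z).
- by move=> z _; rewrite derive1E (@derive_val _ _ _ _ _ _ _ (fd z)).
- by move=> z _; case: (fd z).
Qed.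

End Unique.
Section Unique2.
Variable R : realType.
Local Open Scope classical_set_scope.

Lemma unique_zero (mu : R -> R) n (c d : R) (u du : R -> 'cV[R]_n) (t0 : R) :
  growth_rate mu -> 0 <= c -> 0 <= d ->
  (forall s : R, is_derive s 1 u (du s)) ->
  (forall s, `|du s| <= (c + d * (derive1 mu s / mu s)) * `|u s|) ->
  u t0 = 0 -> forall s, u s = 0.
Proof.
move=> gmu c0 d0 ud dub ut0.
have mu0 : forall s, 0 < mu s by case: gmu.
pose k s := c + d * (derive1 mu s / mu s).
have k0 : forall s, 0 <= k s.
  move=> s; rewrite /k addr_ge0 // mulr_ge0 // divr_ge0 //; [exact: mu_deriv_ge0 | exact: ltW].
pose q s := \sum_(i < n) u s i 0 * u s i 0.
pose dq s := \sum_(i < n) (u s i 0 *: du s i 0 + u s i 0 *: du s i 0).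
have qd : forall s : R, is_derive s 1 q (dq s).
  move=> s.
  have -> : q = \sum_(i < n) (fun r => u r i 0 * u r i 0).
    by rewrite fct_sumE.
  apply: is_derive_sum => i.
  have h := @is_derive_coord R n 1 u s (du s) i 0 (ud s).
  exact: (is_deriveM h h).
pose a : R := 2 * n%:R.
have a0 : 0 <= a by rewrite mulr_ge0.
have dqb : forall s, `|dq s| <= a * k s * q s.
  move=> s.
  apply: le_trans (ler_norm_sum _ _ _) _.
  apply: le_trans (_ : \sum_(i < n) (2 * (`|u s| * `|du s|)) <= _).
    apply: ler_sum => i _.
    have h : `|u s i 0 *: du s i 0| <= `|u s| * `|du s|.
      by rewrite normrM; apply: ler_pM => //; exact: norm_coord.
    by apply: le_trans (ler_normD _ _) _; lra.
  rewrite sumr_const card_ord -mulr_natl.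
  have h1 : `|u s| * `|du s| <= k s * (`|u s| * `|u s|).
    by rewrite mulrCA; apply: ler_wpM2l => //; rewrite mulrC; exact: dub.
  have h2 : k s * (`|u s| * `|u s|) <= k s * q s.
    by apply: ler_wpM2l => //; exact: norm_sq_le.
  have h3 := le_trans h1 h2.
  have hn : (0 : R) <= n%:R by [].
  rewrite /a; nra.
pose L s := c * s + d * ln (mu s).
have Ld : forall s : R, is_derive s 1 L (k s).
  move=> s.
  have h1 : is_derive s 1 (@ln R \o mu) ((mu s)^-1 * derive1 mu s).
    exact: is_derive1_comp (is_derive1_ln (mu0 s)) (@is_derive_mu R mu s gmu).
  have h2 := is_deriveZ d h1.
  have h3 := is_deriveZ c (@is_derive_id _ _ s 1).
  have h4 := is_deriveD h3 h2.
  have -> : L = c \*: id + d \*: (@ln R \o mu) by apply/funext.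
  suff -> : k s = c%:A + d *: ((mu s)^-1 * derive1 mu s) by exact: h4.
  rewrite /k; congr (_ + _).
    by rewrite /GRing.scale /= mulr1.
  by rewrite [_^-1 * _]mulrC.
have qt0 : q t0 = 0.
  by rewrite /q ut0; apply: big1 => i _; rewrite mxE mulr0.
have qge0 : forall s, 0 <= q s by move=> s; exact: sq_coords_ge0.
have expd : forall (b : R) (s : R), is_derive s 1 (fun r => expR (b * L r)) (expR (b * L s) * (b * k s)).
  move=> b s.
  have h1 := is_deriveZ b (Ld s).
  have h2 := is_derive1_comp (is_derive_expR _) h1.
  have -> : (fun r => expR (b * L r)) = expR \o (b \*: L) by apply/funext.
  exact: h2.
have prodd : forall (b : R) (s : R), is_derive s 1 (fun r => q r * expR (b * L r))
    (expR (b * L s) * (dq s + b * k s * q s)).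
  move=> b s.
  have h := is_deriveM (qd s) (expd b s).
  have -> : (fun r => q r * expR (b * L r)) = q * (fun r => expR (b * L r)) by apply/funext.
  suff -> : expR (b * L s) * (dq s + b * k s * q s) =
     q s *: (expR (b * L s) * (b * k s)) + expR (b * L s) *: dq s by exact: h.
  rewrite /GRing.scale /=; ring.
move=> s.
apply: sq_coords_eq0; apply/eqP; rewrite eq_le qge0 andbT.
have [st|ts] := leP t0 s.
  have := @deriv_nincr R _ _ (prodd (- a)) _ _ _ st.
  rewrite qt0 mul0r => H.
  have Epos := expR_gt0 (- a * L s).
  rewrite -(pmulr_lle0 _ Epos); apply: H => r.
  rewrite mulr_ge0_le0 ?expR_ge0 //.
  have := dqb r; rewrite ler_norml => /andP [_ ?]; lra.
have := @deriv_ndecr R _ _ (prodd a) _ _ _ (ltW ts).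
rewrite qt0 mul0r => H.
have Epos := expR_gt0 (a * L s).
rewrite -(pmulr_lle0 _ Epos); apply: H => r.
rewrite mulr_ge0 ?expR_ge0 //.
have := dqb r; rewrite ler_norml => /andP [? _]; lra.
Qed.

End Unique2.
Section Lim.
Variable R : realType.
Local Open Scope classical_set_scope.

Lemma mu_small (mu : R -> R) : growth_rate mu -> forall (dl t : R), 0 < dl ->
  exists s, s <= t /\ mu s <= dl.
Proof.
move=> [mu0 [_ [_ [_ [lim0 _]]]]] dl t dl0.
have := (cvgr0Pnorm_lt _).1 lim0 _ dl0.
move=> [M0 [M0r HM]].
exists (Num.min t (M0 - 1)); split; first by rewrite ge_min lexx.
have : Num.min t (M0 - 1) < M0.
  by rewrite gt_min; apply/orP; right; rewrite ltrBlDr ltrDl.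
move=> /HM; rewrite ger0_norm; [by move/ltW | exact/ltW/mu0].
Qed.

Lemma mu_large (mu : R -> R) : growth_rate mu -> forall (B t : R),
  exists s, t <= s /\ B <= mu s.
Proof.
move=> [mu0 [_ [_ [_ [_ limy]]]]] B t.
have := cvgry_ge limy B.
move=> [M0 [M0r HM]].
exists (Num.max t (M0 + 1)); split; first by rewrite le_max lexx.
apply: HM.
by rewrite lt_max; apply/orP; right; rewrite ltrDl.
Qed.

Lemma small_pow (al e : R) : 0 < al -> 0 < e ->
  exists X, 0 < X /\ forall a, X <= a -> a `^ (- al) <= e.
Proof.
move=> al0 e0.
exists (expR (- ln e / al)); split; first exact: expR_gt0.
move=> a Xa.
have a0 : 0 < a by apply: lt_le_trans Xa; exact: expR_gt0.
rewrite /powR gt_eqF // -[leRHS](lnK e0) ler_expR.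
have : ln (expR (- ln e / al)) <= ln a.
  by rewrite ler_ln // posrE expR_gt0.
rewrite expRK => h.
have : - ln e <= al * ln a.
  by rewrite -ler_pdivrMl // mulrC.
lra.
Qed.

End Lim.
Section Linear.
Variable R : realType.
Local Open Scope classical_set_scope.

Lemma is_derive_mulmx_const m (M : R -> 'M[R]_m) (w : 'cV[R]_m) (t : R) dM :
  is_derive t 1 M dM -> is_derive t 1 (fun s => M s *m w) (dM *m w).
Proof.
move=> Md; apply: is_derive_mx => i j.
rewrite mxE.
have -> : (fun s => (M s *m w) i j) = \sum_(l < m) (fun s => w l j * M s i l).
  by rewrite fct_sumE; apply/funext => s; rewrite mxE; apply: eq_bigr => l _; rewrite mulrC.
apply: is_derive_sum => l.
have h := is_deriveZ (w l j) (@is_derive_coord R m m M t dM i l Md).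
suff -> : dM i l * w l j = w l j *: dM i l by exact: h.
by rewrite /GRing.scale /= mulrC.
Qed.

Lemma linear_rep n (A : R -> 'M[R]_n) (T : R -> R -> 'M[R]_n) (mu : R -> R)
  (z : R -> 'cV[R]_n) :
  evolution_operator A T -> (exists M : R, forall t, `|A t| <= M) ->
  growth_rate mu ->
  (forall s : R, is_derive s 1 z (A s *m z s)) ->
  forall s r, z s = T s r *m z r.
Proof.
move=> [T1 Td] [M AM] gmu zd s r.
have M0 : 0 <= M by apply: le_trans (AM 0).
pose v s := z s - T s r *m z r.
have vd : forall s : R, is_derive s 1 v (A s *m v s).
  move=> x.
  have h := is_deriveB (zd x) (@is_derive_mulmx_const n (T^~ r) (z r) x _ (Td x r)).
  suff -> : A x *m v x = A x *m z x - A x *m T x r *m z r by exact: h.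
  by rewrite /v mulmxBr mulmxA.
have := @unique_zero R mu n (n%:R * M) 0 v (fun s => A s *m v s) r gmu _ (lexx _) vd.
move=> H.
have : v s = 0.
  apply: H.
  - by rewrite mulr_ge0.
  - move=> x; rewrite mul0r addr0; apply: le_trans; first exact: norm_mulmx_le.
    by apply: ler_wpM2r => //; apply: ler_wpM2l => //.
  - by rewrite /v T1 mul1mx subrr.
by move/eqP; rewrite subr_eq0 => /eqP.
Qed.

End Linear.
Section Bounded.
Variable R : realType.
Local Open Scope classical_set_scope.

Lemma small_vec n (w : 'cV[R]_n) : (forall e : R, 0 < e -> `|w| <= e) -> w = 0.
Proof.
move=> H; apply/eqP; rewrite -normr_eq0 eq_le normr_ge0 andbT.
have [//|h] := leP `|w| 0.
have := H (`|w| / 2) (divr_gt0 h (ltr0Sn _ 1)); lra.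
Qed.

Lemma final_bound (K pw e' zs Mz e : R) : 0 < K -> 0 <= pw -> pw <= e' ->
  0 <= zs -> zs <= Mz -> 0 <= Mz -> e' = e / (K * (Mz + 1)) -> 0 < e ->
  K * pw * zs <= e.
Proof.
move=> K0 pw0 pwe zs0 zsM Mz0 he e0.
have H1 : K * pw * zs <= K * (e' * (Mz + 1)).
  rewrite -mulrA; apply: ler_wpM2l; first exact: ltW.
  apply: ler_pM => //; lra.
apply: le_trans H1 _; rewrite le_eqVlt; apply/orP; left; apply/eqP.
rewrite he.
field; apply/andP; split; [apply: lt0r_neq0 | apply: lt0r_neq0 ] => //; lra.
Qed.

Lemma bounded_zero n (A : R -> 'M[R]_n) (T : R -> R -> 'M[R]_n) (mu : R -> R)
  (P : R -> 'M[R]_n) (K al : R) (z : R -> 'cV[R]_n) :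
  evolution_operator A T -> (exists M : R, forall t, `|A t| <= M) ->
  growth_rate mu -> algebraic_dichotomy mu T P K al ->
  (forall s : R, is_derive s 1 z (A s *m z s)) -> bounded_on_R z ->
  forall t, z t = 0.
Proof.
move=> evo AM gmu [K0 [al0 [_ [comm [dP dQ]]]]] zd [Mz hz] t.
have rep := @linear_rep R n A T mu z evo AM gmu zd.
have mu0 : forall s, 0 < mu s by case: gmu.
have Mz0 : 0 <= Mz by apply: le_trans (hz 0).
have Pz : P t *m z t = 0.
  apply: small_vec => e e0.
  pose e' := e / (K * (Mz + 1)).
  have e'0 : 0 < e' by rewrite divr_gt0 // mulr_gt0 //; lra.
  have [X [X0 HX]] := @small_pow R _ _ al0 e'0.
  have [s [st hs]] := @mu_small R mu gmu _ t (divr_gt0 (mu0 t) X0).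
  have -> : P t *m z t = T t s *m P s *m z s.
    by rewrite (rep t s) mulmxA -comm.
  apply: le_trans (dP t s (z s) st) _.
  apply: (@final_bound K _ e' _ Mz) => //.
  - exact: powR_ge0.
  - apply: HX; rewrite ler_pdivlMr // mulrC -ler_pdivlMr //.
have Qz : (1%:M - P t) *m z t = 0.
  apply: small_vec => e e0.
  pose e' := e / (K * (Mz + 1)).
  have e'0 : 0 < e' by rewrite divr_gt0 // mulr_gt0 //; lra.
  have [X [X0 HX]] := @small_pow R _ _ al0 e'0.
  have [s [st hs]] := @mu_large R mu gmu (X * mu t) t.
  have -> : (1%:M - P t) *m z t = T t s *m (1%:M - P s) *m z s.
    by rewrite (rep t s) mulmxA mulmxBl mul1mx -comm mulmxBr mulmx1.
  apply: le_trans (dQ t s (z s) st) _.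
  apply: (@final_bound K _ e' _ Mz) => //.
  - exact: powR_ge0.
  - apply: HX; rewrite ler_pdivlMr //.
by rewrite -[z t]mul1mx -(subrK (P t) 1%:M) mulmxDl Pz Qz addr0.
Qed.

End Bounded.
Lemma zmod_id1 (V : zmodType) (a b c p q : V) :
  a + p - (b + (c + q)) = a - (b + c) + (p - q).
Proof. by rewrite [RHS]addrACA -opprD addrA. Qed.

Lemma zmod_id2 (V : zmodType) (a c p : V) : a - p + (c + p) = a + c.
Proof. by rewrite addrACA addNr addr0. Qed.

Theorem lemma3p7 (R : realType) (n : nat)
  (A : R -> 'M[R]_n) (T : R -> R -> 'M[R]_n) (mu : R -> R)
  (P : R -> 'M[R]_n) (K alpha : R)
  (f : R -> 'cV[R]_n -> 'cV[R]_n) (beta gamma : R)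
  (X Y h g : R -> R -> 'cV[R]_n -> 'cV[R]_n) :
  continuous A ->
  (exists M : R, forall t, `|A t| <= M) ->
  evolution_operator A T ->
  growth_rate mu ->
  algebraic_dichotomy mu T P K alpha ->
  continuous (fun p : R * 'cV[R]_n => f p.1 p.2) ->
  0 <= beta -> 0 <= gamma ->
  (forall t x, `|f t x| <= beta * (derive1 mu t / mu t)) ->
  (forall t x1 x2, `|f t x1 - f t x2| <= gamma * (derive1 mu t / mu t) * `|x1 - x2|) ->
  6 * K * gamma / alpha < 1 ->
  (forall tau xi, X tau tau xi = xi /\
     solves (fun t x => A t *m x + f t x) (fun t => X t tau xi)) ->
  (forall tau xi, Y tau tau xi = xi /\
     solves (fun t x => A t *m x) (fun t => Y t tau xi)) ->
  (forall tau xi, bounded_on_R (fun t => h t tau xi) /\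
     solves (fun t z => A t *m z - f t (X t tau xi)) (fun t => h t tau xi)) ->
  (forall tau xi, bounded_on_R (fun t => g t tau xi) /\
     solves (fun t z => A t *m z + f t (Y t tau xi + z)) (fun t => g t tau xi)) ->
  forall (t : R) (y : 'cV[R]_n), H_of h t (G_of g t y) = y.
Proof.
move=> _ AMe evo gmu dich _ _ g0 _ fL _ Xh Yh hh gh t y.
have [M AM] := AMe.
have M0 : 0 <= M by apply: le_trans (AM 0).
rewrite /H_of /G_of.
set x := y + g t t y.
have [Xt Xd] := Xh t x.
have [Yt Yd] := Yh t y.
have [[Mg gb] gd] := gh t y.
have [[Mh hb] hd] := hh t x.
have XY : forall s, X s t x = Y s t y + g s t y.
  pose u s := X s t x - (Y s t y + g s t y).
  pose du s := A s *m u s + (f s (X s t x) - f s (Y s t y + g s t y)).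
  have ud : forall s : R, is_derive s 1 u (du s).
    move=> s.
    have hd' := is_deriveB (Xd s) (is_deriveD (Yd s) (gd s)).
    suff -> : du s = (A s *m X s t x + f s (X s t x)) -
        (A s *m Y s t y + (A s *m g s t y + f s (Y s t y + g s t y))) by exact: hd'.
    by rewrite /du /u mulmxBr mulmxDr zmod_id1.
  have := @unique_zero R mu n (n%:R * M) gamma u du t gmu _ g0 ud.
  move=> H s; apply/eqP; rewrite -subr_eq0; apply/eqP; apply: H.
  - by rewrite mulr_ge0.
  - move=> s'; rewrite /du.
    apply: le_trans (ler_normD _ _) _.
    rewrite mulrDl; apply: lerD.
      apply: le_trans; first exact: norm_mulmx_le.
      by apply: ler_wpM2r => //; apply: ler_wpM2l => //.
    exact: fL.
  - by rewrite /u Xt Yt subrr.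
have wd : forall s : R, is_derive s 1 (fun s => h s t x + g s t y)
    (A s *m (h s t x + g s t y)).
  move=> s.
  have hd' := is_deriveD (hd s) (gd s).
  suff -> : A s *m (h s t x + g s t y) = (A s *m h s t x - f s (X s t x)) +
     (A s *m g s t y + f s (Y s t y + g s t y)) by exact: hd'.
  by rewrite XY zmod_id2 mulmxDr.
have wb : bounded_on_R (fun s => h s t x + g s t y).
  exists (Mh + Mg) => s; apply: le_trans (ler_normD _ _) _; exact: lerD.
have := @bounded_zero R n A T mu P K alpha _ evo AMe gmu dich wd wb t.
rewrite /x => hg0.
by rewrite -addrA [g t t y + _]addrC hg0 addr0.
Qed.
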